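(* Let $(h,n)=(3,2)$ and $U=\{id\}\times S_2\leq S_3\times S_2$. Then $U$ is a neutrality group with respect to $(3,2)$ but not a symmetry group with respect to $(3,2)$.
   Context: Permutations compose as $(\sigma\tau)(x)=\sigma(\tau(x))$. Let $G=S_h\times S_n$ and $\mathcal{P}=(S_n)^h$ (preference profiles), with $G$ acting by $(p^{(\varphi,\psi)})_i=\psi\,p_{\varphi^{-1}(i)}$. A social preference function (SPF) is any $F:\mathcal{P}\to S_n$; its symmetry group is $G(F)=\{(\varphi,\psi)\in G: F(p^{(\varphi,\psi)})=\psi F(p)\ \forall p\}$ and its neutrality group is $G_2(F)=G(F)\cap(\{id\}\times S_n)$. $U$ is a symmetry group (resp. neutrality group) with respect to $(h,n)$ if $U=G(F)$ (resp. $U=G_2(F)$) for some SPF $F$. *)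

(* Defs.v *)
From mathcomp Require Import all_boot all_fingroup.
Set Implicit Arguments. Unset Strict Implicit. Unset Printing Implicit Defensive.
Local Open Scope group_scope.

(* Convention: in MathComp, (s * t) x = t (s x).  Hence the paper's
   function composition  sigma o tau  is  tau * sigma  here. *)
Definition pcomp (n : nat) (s t : 'S_n) : 'S_n := t * s.

Lemma pcompE n (s t : 'S_n) x : pcomp s t x = s (t x).
Proof. by rewrite /pcomp permM. Qed.

Definition profile (h n : nat) := {ffun 'I_h -> 'S_n}.

Definition act_prof (h n : nat) (g : 'S_h * 'S_n) (p : profile h n) : profile h n :=
  [ffun i => pcomp g.2 (p (g.1^-1 i))].

Definition sym_group (h n : nat) (F : profile h n -> 'S_n) : {set 'S_h * 'S_n} :=
  [set g | [forall p : profile h n, F (act_prof g p) == pcomp g.2 (F p)]].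

Definition neut_group (h n : nat) (F : profile h n -> 'S_n) : {set 'S_h * 'S_n} :=
  sym_group F :&: [set g | g.1 == 1].

Definition is_symmetry_group (h n : nat) (U : {set 'S_h * 'S_n}) : Prop :=
  exists F : profile h n -> 'S_n, sym_group F = U.

Definition is_neutrality_group (h n : nat) (U : {set 'S_h * 'S_n}) : Prop :=
  exists F : profile h n -> 'S_n, neut_group F = U.

(* Main.v *)
Require Import Defs.
From mathcomp Require Import all_boot all_fingroup.
Local Open Scope group_scope.

Definition o0 : 'I_3 := @Ordinal 3 0 isT.
Definition o1 : 'I_3 := @Ordinal 3 1 isT.
Definition o2 : 'I_3 := @Ordinal 3 2 isT.
Definition t : 'S_2 := tperm (@Ordinal 2 0 isT) (@Ordinal 2 1 isT).

Definition mk (a b c : 'S_2) : profile 3 2 :=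
  [ffun i : 'I_3 => if val i == 0%N then a else if val i == 1%N then b else c].

Lemma tpE n (x y z : 'I_n) : tperm x y z = if z == x then y else if z == y then x else z.
Proof. by rewrite /tperm permE. Qed.

Lemma S2_cases (s : 'S_2) : s = 1 \/ s = t.
Proof.
have H01 : forall x : 'I_2, x = @Ordinal 2 0 isT \/ x = @Ordinal 2 1 isT.
  by case=> [[|[|m]] Hm] //; [left|right]; apply/val_inj.
have inj := @perm_inj _ s.
have H1c := H01 (s (@Ordinal 2 1 isT)).
case: (H01 (s (@Ordinal 2 0 isT))) => H0.
- left; apply/permP => x; rewrite perm1.
  case: (H01 x) => ->; first by rewrite H0.
  case: H1c => H1; last by rewrite H1.
  by move: (inj _ _ (etrans H1 (esym H0))) => /(congr1 val).
- right; apply/permP => x; rewrite tpE.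
  case: (H01 x) => ->; first by rewrite H0.
  case: H1c => H1; first by rewrite H1.
  by move: (inj _ _ (etrans H1 (esym H0))) => /(congr1 val).
Qed.

Lemma tt1 : t * t = 1. Proof. exact: tperm2. Qed.

Lemma prof_eq (p : profile 3 2) : p = mk (p o0) (p o1) (p o2).
Proof.
apply/ffunP => i; rewrite ffunE.
by case: i => [[|[|[|m]]] Hi] //=; congr (p _); apply/val_inj.
Qed.

Lemma act_neut (a b c : 'S_2) :
  act_prof (1, t) (mk a b c) = mk (a * t) (b * t) (c * t).
Proof.
apply/ffunP => i; rewrite !ffunE /= invg1 perm1 /Defs.pcomp.
by case: i => [[|[|[|m]]] Hi].
Qed.

Lemma act01 (a b c : 'S_2) : act_prof (tperm o0 o1, 1) (mk a b c) = mk b a c.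
Proof.
apply/ffunP => i; rewrite !ffunE /= tpermV tpE /Defs.pcomp mulg1.
by case: i => [[|[|[|m]]] Hi].
Qed.

Lemma act02 (a b c : 'S_2) : act_prof (tperm o0 o2, 1) (mk a b c) = mk c b a.
Proof.
apply/ffunP => i; rewrite !ffunE /= tpermV tpE /Defs.pcomp mulg1.
by case: i => [[|[|[|m]]] Hi].
Qed.

Lemma act12 (a b c : 'S_2) : act_prof (tperm o1 o2, 1) (mk a b c) = mk a c b.
Proof.
apply/ffunP => i; rewrite !ffunE /= tpermV tpE /Defs.pcomp mulg1.
by case: i => [[|[|[|m]]] Hi].
Qed.

Lemma key (F : profile 3 2 -> 'S_2) :
  (1, t) \in sym_group F ->
  exists2 phi : 'S_3, phi != 1 & (phi, 1) \in sym_group F.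
Proof.
rewrite inE => /forallP Hn.
have N a b c : F (mk (a * t) (b * t) (c * t)) = F (mk a b c) * t.
  by move: (Hn (mk a b c)) => /eqP; rewrite act_neut.
have E0 : F (mk 1 t t) = F (mk t 1 1) * t.
  by rewrite -N tt1 mul1g.
have E1 : F (mk t 1 t) = F (mk 1 t 1) * t.
  by rewrite -N tt1 mul1g.
have E2 : F (mk t t 1) = F (mk 1 1 t) * t.
  by rewrite -N tt1 mul1g.
have memP : forall phi : 'S_3, (forall p, F (act_prof (phi, 1) p) = F p) ->
    (phi, 1) \in sym_group F.
  move=> phi H; rewrite inE; apply/forallP => p; apply/eqP.
  by rewrite H /Defs.pcomp mulg1.
have ne : forall x y : 'I_3, x != y -> tperm x y != 1.
  move=> x y xy; apply/eqP => /permP /(_ x); rewrite tpermL perm1 => E.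
  by rewrite E eqxx in xy.
have gen : forall p : profile 3 2, exists a b c, p = mk a b c /\
    (a = 1 \/ a = t) /\ (b = 1 \/ b = t) /\ (c = 1 \/ c = t).
  move=> p; exists (p o0), (p o1), (p o2); split; first exact: prof_eq.
  by split; [|split]; apply: S2_cases.
case: (S2_cases (F (mk t 1 1))) => B0;
case: (S2_cases (F (mk 1 t 1))) => B1;
case: (S2_cases (F (mk 1 1 t))) => B2;
  first [ exists (tperm o0 o1); [by apply: ne|];
          apply: memP => p; have [a [b [c [-> [[->|->] [[->|->] [->|->]]]]]]] := gen p;
          rewrite act01 // ?E0 ?E1 ?E2 ?B0 ?B1 ?B2; by rewrite -?E0 -?E1 -?E2 ?B0 ?B1 ?B2
        | exists (tperm o0 o2); [by apply: ne|];
          apply: memP => p; have [a [b [c [-> [[->|->] [[->|->] [->|->]]]]]]] := gen p;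
          rewrite act02 // ?E0 ?E1 ?E2 ?B0 ?B1 ?B2; by rewrite -?E0 -?E1 -?E2 ?B0 ?B1 ?B2
        | exists (tperm o1 o2); [by apply: ne|];
          apply: memP => p; have [a [b [c [-> [[->|->] [[->|->] [->|->]]]]]]] := gen p;
          rewrite act12 // ?E0 ?E1 ?E2 ?B0 ?B1 ?B2; by rewrite -?E0 -?E1 -?E2 ?B0 ?B1 ?B2 ].
Qed.

Theorem mainTheorem9 :
  let U : {set 'S_3 * 'S_2} := [set g | g.1 == 1] in
  is_neutrality_group U /\ ~ is_symmetry_group U.
Proof.
move=> U; split.
- exists (fun p => p o0); apply/setP => g; rewrite !inE.
  case: g => phi psi /=; case E: (phi == 1); rewrite ?andbF ?andbT //.
  move/eqP: E => ->; apply/forallP => p; apply/eqP.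
  by rewrite ffunE invg1 perm1.
- case=> F HF.
  have : (1, t) \in sym_group F by rewrite HF inE.
  case/key => phi nphi; rewrite HF inE /=.
  by rewrite (negbTE nphi).
Qed.
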